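(* Let $(Z,d)$ be an infinite compact metric space and $\Gamma$ a regular approximation graph for $Z$ with refining sequence $(\mathcal V_n)_{n\ge0}$. Then $$\mathcal I_\Gamma=\pi_\Gamma^{-1}\Big(\bigcap_{n\in\mathbb N}\bigcup\mathcal V_n^{\mathrm{ess}}\Big).$$
   Context: A refining sequence is a sequence $(\mathcal V_n)_{n\ge0}$ of finite covers of $Z$, all open or all closed with nonempty interiors, with $\mathcal V_0=\{Z\}$, each element of $\mathcal V_{n+1}$ contained in some element of $\mathcal V_n$, and $\max_{v\in\mathcal V_n}\operatorname{diam}v\to0$. Its approximation graph $\Gamma$ has vertices $\coprod_n\mathcal V_n$ and an edge from $v_n\in\mathcal V_n$ to $v_{n+1}\in\mathcal V_{n+1}$ whenever $v_{n+1}\subset v_n$. The infinite path space $\mathcal P_\Gamma$ is the set of sequences of edges $(p_n)_{n\ge0}$, $p_n$ from some $v_n\in\mathcal V_n$ to some $v_{n+1}\in\mathcal V_{n+1}$, consecutive edges sharing their common vertex; it carries the compact topology generated by cylinder sets (paths with prescribed first finitely many edges). Writing $r(p_n)=v_{n+1}$, the map $\pi_\Gamma:\mathcal P_\Gamma\to Z$ is $\pi_\Gamma(\tilde p)=$ the unique point of $\bigcap_{n\ge0}\operatorname{cl}(r(p_n))$; it is continuous and surjective. $\mathcal I_\Gamma=\{\tilde p\in\mathcal P_\Gamma:\#\pi_\Gamma^{-1}(\pi_\Gamma(\tilde p))=1\}$. The overlapping set is $\mathcal Y_n=\{\operatorname{cl}(v)\cap\operatorname{cl}(w):v\ne w\in\mathcal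 V_n\}$, and $v^{\mathrm{ess}}=\operatorname{int}(v)\setminus\bigcup\mathcal Y_n$ for $v\in\mathcal V_n$, $\mathcal V_n^{\mathrm{ess}}=\{v^{\mathrm{ess}}:v\in\mathcal V_n\}$. $\Gamma$ is regular if for every $n\in\mathbb N$ and $v\in\mathcal V_n$: $v=\bigcup\{w\in\mathcal V_{n+1}:w\subset v\}$ and $v^{\mathrm{ess}}\ne\varnothing$. *)

(* Defs.v *)
From HB Require Import structures.
From mathcomp Require Import all_boot all_order all_algebra.
From mathcomp Require Import all_classical all_reals all_analysis.
Set Implicit Arguments. Unset Strict Implicit. Unset Printing Implicit Defensive.
Import Order.TTheory GRing.Theory Num.Theory.
Local Open Scope classical_set_scope.
Local Open Scope ring_scope.

Section ApproxGraph.
Context {R : realType} {Z : metricType R}.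

(* diameter of a subset, in the extended reals (-oo for the empty set) *)
Definition diam (A : set Z) : \bar R :=
  ereal_sup [set r | exists x y, [/\ A x, A y & r = (mdist x y)%:E]].

Definition refining_sequence (V : nat -> set (set Z)) : Prop :=
  (forall n, finite_set (V n)) /\
  (forall n, \bigcup_(v in V n) v = [set: Z]) /\
  ((forall n v, V n v -> open v) \/
     (forall n v, V n v -> closed v /\ interior v !=set0)) /\
  V 0%N = [set [set: Z]] /\
  (forall n w, V n.+1 w -> exists2 v, V n v & w `<=` v) /\
  (forall e : R, 0 < e -> exists N : nat, forall n, (N <= n)%N ->
     forall v, V n v -> (diam v <= e%:E)%E).

(* An edge of the approximation graph from level n to level n+1,
   represented by its source v_n (first component) and range v_{n+1}
   (second component); there is at most one edge between two vertices. *)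
Definition edge (V : nat -> set (set Z)) (n : nat) (e : set Z * set Z) : Prop :=
  [/\ V n e.1, V n.+1 e.2 & e.2 `<=` e.1].

Definition path_space (V : nat -> set (set Z)) : set (nat -> set Z * set Z) :=
  [set p | forall n, edge V n (p n) /\ (p n).2 = (p n.+1).1].

(* pi_Gamma p = the unique point of \bigcap_n cl(r(p_n)); z0 is only a
   default value for the choice operator xget. *)
Definition pi_Gamma (z0 : Z) (p : nat -> set Z * set Z) : Z :=
  xget z0 (\bigcap_(n in [set: nat]) closure (p n).2).

Definition I_Gamma (z0 : Z) (V : nat -> set (set Z)) : set (nat -> set Z * set Z) :=
  [set p | path_space V p /\
     [set q | path_space V q /\ pi_Gamma z0 q = pi_Gamma z0 p] = [set p]].

Definition overlap (V : nat -> set (set Z)) (n : nat) : set (set Z) :=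
  [set A | exists v w, [/\ V n v, V n w, v <> w & A = closure v `&` closure w]].

Definition ess (V : nat -> set (set Z)) (n : nat) (v : set Z) : set Z :=
  interior v `\` \bigcup_(A in overlap V n) A.

Definition regular (V : nat -> set (set Z)) : Prop :=
  forall n v, V n v ->
    v = \bigcup_(w in [set w | V n.+1 w /\ w `<=` v]) w /\ ess V n v !=set0.

End ApproxGraph.

(* Main.v *)
Require Import Defs.
From HB Require Import structures.
From mathcomp Require Import all_boot all_order all_algebra.
From mathcomp Require Import all_classical all_reals all_analysis.
From mathcomp Require Import lra zify.
Import Order.TTheory GRing.Theory Num.Theory.
Local Open Scope classical_set_scope.
Local Open Scope ring_scope.

Section Helpers.
Context {R : realType} {Z : metricType R}.

Lemma closure_fin_bigcup (F : set (set Z)) : finite_set F ->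
  closure (\bigcup_(A in F) A) `<=` \bigcup_(A in F) closure A.
Proof.
move=> /finite_seqP[s ->]; elim: s => [|a s IH] x /=.
  have -> : \bigcup_(A in [set` [::]]) A = @set0 Z.
    by apply/seteqP; split => y //= [A].
  by rewrite closure0.
have sub : \bigcup_(A in [set` (a :: s)]) A `<=` a `|` \bigcup_(A in [set` s]) A.
  move=> y [A /=]; rewrite inE => /orP[/eqP -> ay|As Ay]; first by left.
  by right; exists A.
move=> /(closureS sub); rewrite closureU => -[ax|/IH [A As Ax]].
  by exists a => //=; rewrite inE eqxx.
by exists A => //=; rewrite inE orbC As.
Qed.

Lemma sing_lemma (V : nat -> set (set Z)) (q : nat -> set Z * set Z) :
  refining_sequence V -> path_space V q -> forall y z : Z,
  (forall k, closure (q k).2 y) -> (forall k, closure (q k).2 z) -> y = z.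
Proof.
move=> [_ [_ [_ [_ [_ Vdiam]]]]] qP y z Hy Hz.
have [//|yz] := eqVneq y z.
have d0 : 0 < mdist y z by rewrite mdist_gt0.
exfalso; set d := mdist y z in d0.
have e0 : 0 < d / 4 by rewrite divr_gt0.
have [N HN] := Vdiam _ e0.
have [[_ VN _] _] := qP N.
have /(_ N.+1 (leqW (leqnn N)) _ VN) Hdiam := HN.
have [y' [Sy' yy']] := Hy N _ (nbhsx_ballx y _ e0).
have [z' [Sz' zz']] := Hz N _ (nbhsx_ballx z _ e0).
rewrite ballEmdist /= in yy'; rewrite ballEmdist /= in zz'.
have : ((mdist y' z')%:E <= (d / 4)%:E)%E.
  apply: le_trans Hdiam; apply: ereal_sup_ubound; exists y', z'; split => //.
rewrite lee_fin => Hyz.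
have t1 := metric_triangle y y' z.
have t2 := metric_triangle y' z' z.
rewrite (metric_sym z' z) in t2.
move: d0; rewrite -/d in t1 *; lra.
Qed.


Lemma inter_lemma (V : nat -> set (set Z)) (q : nat -> set Z * set Z) (z0 : Z) :
  compact [set: Z] -> (forall n v, V n v -> v !=set0) ->
  path_space V q -> forall k, closure (q k).2 (pi_Gamma z0 q).
Proof.
move=> cZ Vne qP.
pose S k := closure (q k).2.
have nest1 k : S k.+1 `<=` S k.
  have [[_ _ sub] e] := qP k.+1; have [_ e'] := qP k.
  by apply: closureS; rewrite e'.
have nest i j : (i <= j)%N -> S j `<=` S i.
  elim: j => [|j IH]; first by rewrite leqn0 => /eqP ->.
  rewrite leq_eqVlt => /orP[/eqP -> //|]; rewrite ltnS => /IH.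
  by move=> h; apply: subset_trans h; apply: nest1.
have FF : Filter (filter_from setT S).
  apply: filter_fromT_filter; first by exists 0%N.
  move=> i j; exists (maxn i j) => x Sx; split.
    by apply: (nest _ _ (leq_maxl i j)).
  by apply: (nest _ _ (leq_maxr i j)).
have PF : ProperFilter (filter_from setT S).
  apply: filter_from_proper => i _.
  have [[_ Vi _] _] := qP i; have [x xi] := Vne _ _ Vi.
  by exists x; apply: subset_closure.
have [x [_ cx]] := cZ _ PF (ex_intro2 _ _ 0%N I (fun _ _ => I)).
have Hx : forall k, S k x.
  move=> k; have e : closure (q k).2 = closure (closure (q k).2).
    by apply/closure_id/closed_closure.
  rewrite /S e.
  move=> B Bx; apply: cx => //; by exists k.
have : (\bigcap_(n in [set: nat]) closure (q n).2) (pi_Gamma z0 q).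
  by apply: xgetPex; exists x => n _; apply: Hx.
by move=> h k; apply: h.
Qed.


Lemma child_lemma (V : nat -> set (set Z)) (x : Z) :
  refining_sequence V -> regular V -> forall k w, V k w -> closure w x ->
  exists2 c, V k.+1 c & c `<=` w /\ closure c x.
Proof.
move=> [Vfin _] Vreg k w Vw wx.
have [ew _] := Vreg _ _ Vw.
have fin : finite_set [set c | V k.+1 c /\ c `<=` w].
  by apply: (sub_finite_set _ (Vfin k.+1)) => c [].
move: wx; rewrite ew => /(closure_fin_bigcup _ fin) [c [Vc cw] cx].
by exists c => //; split => //; rewrite -ew.
Qed.

Lemma build_lemma (V : nat -> set (set Z)) (x : Z) (m : nat) (v : set Z) :
  refining_sequence V -> regular V -> V m.+1 v -> closure v x ->
  exists q, [/\ path_space V q, (q m).2 = v & forall k, closure (q k).2 x].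
Proof.
move=> RS Vreg Vv vx.
have [_ [_ [_ [_ [Vpar _]]]]] := RS.
have [par Hpar] : {par : nat * set Z -> set Z & forall t,
    V t.1.+1 t.2 -> V t.1 (par t) /\ t.2 `<=` par t}.
  apply: (@boolp.choice _ _ (fun t u => V t.1.+1 t.2 -> V t.1 u /\ t.2 `<=` u)).
  move=> [k w] /=; case: (pselect (V k.+1 w)) => h.
    by have [u Vu wu] := Vpar _ _ h; exists u.
  by exists setT.
have [chi Hchi] : {chi : nat * set Z -> set Z & forall t,
    V t.1 t.2 -> closure t.2 x -> [/\ V t.1.+1 (chi t), chi t `<=` t.2 & closure (chi t) x]}.
  apply: (@boolp.choice _ _ (fun t u => V t.1 t.2 -> closure t.2 x ->
                          [/\ V t.1.+1 u, u `<=` t.2 & closure u x])).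
  move=> [k w] /=; case: (pselect (V k w /\ closure w x)) => [[h1 h2]|h].
    by have [c Vc [cw cx]] := @child_lemma V x RS Vreg _ _ h1 h2; exists c.
  by exists setT => h1 h2; exfalso; apply: h.
pose d := fix d j := if j is j'.+1 then chi ((m.+1 + j')%N, d j') else v.
pose a := fix a j := if j is j'.+1 then par ((m - j')%N, a j') else v.
pose u k := if (k <= m.+1)%N then a (m.+1 - k)%N else d (k - m.+1)%N.
have Hd j : V (m.+1 + j)%N (d j) /\ closure (d j) x.
  elim: j => [|j [IH1 IH2]]; first by rewrite addn0.
  by have [? ? ?] := Hchi ((m.+1 + j)%N, d j) IH1 IH2; rewrite addnS.
have Hd2 j : d j.+1 `<=` d j.
  by have [IH1 IH2] := Hd j; have [? ? ?] := Hchi ((m.+1 + j)%N, d j) IH1 IH2.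
have Ha j : (j <= m.+1)%N -> V (m.+1 - j)%N (a j) /\ v `<=` a j.
  elim: j => [|j IH] hj; first by rewrite subn0; split.
  have [IH1 IH2] := IH (ltnW hj).
  have e : (m.+1 - j)%N = (m - j)%N.+1 by rewrite subSn.
  rewrite e in IH1; have [? ?] := Hpar (_, _) IH1.
  by rewrite subSS; split => //; apply: subset_trans IH2 _.
have Ha2 j : (j <= m)%N -> a j `<=` a j.+1.
  move=> hj; have [IH1 _] := Ha j (leqW hj).
  have e : (m.+1 - j)%N = (m - j)%N.+1 by rewrite subSn.
  by rewrite e in IH1; have [? ?] := Hpar (_, _) IH1.
have Hu k : [/\ V k (u k), closure (u k) x & u k.+1 `<=` u k].
  rewrite /u; case: (ltngtP k m.+1) => hk.
  - have hk' : (k <= m.+1)%N by apply: ltnW.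
    idtac; have [h1 h2] := Ha (m.+1 - k)%N (leq_subr _ _).
    rewrite subKn // in h1; split => //.
      by apply: (closureS h2).
    have e : (m.+1 - k)%N = (m - k)%N.+1 by rewrite subSn.
    by rewrite subSS e; apply: Ha2; apply: leq_subr.
  - idtac.
    have [h1 h2] := Hd (k - m.+1)%N; rewrite subnKC ?(ltnW hk) // in h1.
    split => //; rewrite subSn ?(ltnW hk) //.
  - rewrite hk subnn subSn // subnn /=.
    have [h1 h2] := Hd 0%N; rewrite addn0 in h1; split => //.
    by have := Hd2 0%N.
exists (fun k => (u k, u k.+1)); split => /=.
- by move=> k; have [h1 _ h3] := Hu k; have [h1' _ _] := Hu k.+1.
- by rewrite /u leqnn subnn.
- by move=> k; have [] := Hu k.+1.
Qed.


Lemma cover_lemma (V : nat -> set (set Z)) (n : nat) (x : Z) :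
  refining_sequence V -> ~ (exists2 v, V n v & ess V n v x) ->
  exists v w, [/\ V n v, V n w, v <> w, closure v x & closure w x].
Proof.
move=> [Vfin [Vcov _]] nE.
have : [set: Z] x by [].
rewrite -(Vcov n) => -[u Vu ux].
case: (pselect (interior u x)) => iux.
  case: (pselect ((\bigcup_(A in overlap V n) A) x)) => [[A [v [w [Vv Vw vw ->]]] [vx wx]]|h].
    by exists v, w.
  by exfalso; apply: nE; exists u => //; split.
have : closure (~` u) x by rewrite closure_setC.
have sub : ~` u `<=` \bigcup_(w in [set w | V n w /\ w <> u]) w.
  move=> y uy; have : [set: Z] y by [].
  rewrite -(Vcov n) => -[w Vw wy]; exists w => //; split => // wu.
  by apply: uy; rewrite -wu.
move=> /(closureS sub).
have fin : finite_set [set w | V n w /\ w <> u].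
  by apply: (sub_finite_set _ (Vfin n)) => c [].
move=> /(closure_fin_bigcup _ fin) [w [Vw wu] wx].
exists u, w; split => //; first by move=> e; apply: wu.
exact: subset_closure.
Qed.

End Helpers.

Theorem proposition2p22 (R : realType) (Z : metricType R) (z0 : Z)
  (V : nat -> set (set Z)) :
  compact [set: Z] -> ~ finite_set [set: Z] ->
  refining_sequence V -> regular V ->
  I_Gamma z0 V =
    path_space V `&`
      pi_Gamma z0 @^-1` (\bigcap_(n in [set: nat]) \bigcup_(v in V n) ess V n v).
Proof.
move=> cZ _ RS Vreg.
have Vne : forall n v, V n v -> v !=set0.
  move=> n v Vv; have [_ [y [iy _]]] := Vreg _ _ Vv.
  by exists y; apply: interior_subset.
have V0 : forall v, V 0%N v -> v = setT.
  by have [_ [_ [_ [-> _]]]] := RS.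
have piE : forall q x, path_space V q -> (forall k, closure (q k).2 x) ->
    pi_Gamma z0 q = x.
  move=> q x qP Hx; apply: (@sing_lemma R Z V q RS qP) => //.
  exact: (@inter_lemma R Z V q z0 cZ Vne qP).
rewrite eqEsubset; split.
  move=> p [pP peq]; split => //.
  have uniq : forall q, path_space V q -> pi_Gamma z0 q = pi_Gamma z0 p -> q = p.
    move=> q qP qe.
    have : [set q | path_space V q /\ pi_Gamma z0 q = pi_Gamma z0 p] q by [].
    by rewrite peq.
  move=> n _; set x := pi_Gamma z0 p.
  case: (pselect (exists2 v, V n v & ess V n v x)) => [[v ? ?]|nE].
    by exists v.
  exfalso; have [v [w [Vv Vw vw vx wx]]] := @cover_lemma R Z V n x RS nE.
  case: n Vv Vw {nE} => [|m] Vv Vw.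
    by apply: vw; rewrite (V0 _ Vv) (V0 _ Vw).
  have [q1 [q1P q1m q1x]] := @build_lemma R Z V x m v RS Vreg Vv vx.
  have [q2 [q2P q2m q2x]] := @build_lemma R Z V x m w RS Vreg Vw wx.
  have e1 := uniq _ q1P (piE _ _ q1P q1x).
  have e2 := uniq _ q2P (piE _ _ q2P q2x).
  by apply: vw; rewrite -q1m -q2m e1 e2.
move=> p [pP Hx]; split => //.
apply/seteqP; split => q /=; last by move=> ->.
move=> [qP qeq]; set x := pi_Gamma z0 p in Hx qeq.
have key : forall k u v, V k.+1 u -> closure u x -> V k.+1 v -> ess V k.+1 v x ->
    u = v.
  move=> k u v Vu ux Vv [ivx nov].
  apply: contrapT => uv; apply: nov.
  exists (closure v `&` closure u); last first.
    by split => //; apply: subset_closure; apply: interior_subset.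
  by exists v, u; split => // e; apply: uv.
have px k : closure (p k).2 x by apply: (@inter_lemma R Z V p z0 cZ Vne pP).
have qx k : closure (q k).2 x by rewrite -qeq; apply: (@inter_lemma R Z V q z0 cZ Vne qP).
have e2 k : (q k).2 = (p k).2.
  have [[_ Vq _] _] := qP k; have [[_ Vp _] _] := pP k.
  have [v Vv ev] := Hx k.+1 I.
  by rewrite (key _ _ _ Vq (qx k) Vv ev) (key _ _ _ Vp (px k) Vv ev).
apply/funext => k; rewrite [q k]surjective_pairing [p k]surjective_pairing e2.
congr pair; case: k => [|k].
  by have [[Vq _ _] _] := qP 0%N; have [[Vp _ _] _] := pP 0%N; rewrite (V0 _ Vq) (V0 _ Vp).
by have [_ <-] := qP k; have [_ <-] := pP k; rewrite e2.
Qed.
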